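(* Assume the setting of the context, and in addition that $c_n\to1$ and $\sum_{n=1}^\infty\sqrt{c_n-c_{n-1}}<\infty$. Then for every $\omega\in\Omega$ the functions $\alpha_n(\cdot,\omega)$ converge uniformly on $[0,1]$ to a function $\alpha(\cdot,\omega)$; the resulting map $\alpha:[0,1]\times\Omega\to\mathbb{C}$ is measurable (and $\omega\mapsto\alpha(t,\omega)$ is measurable for every $t$), and for each $\omega\in\Omega$: (i) $\alpha(\cdot,\omega)$ is continuous at every $t\in[0,1]\setminus D$; in particular it is Riemann integrable on $[0,1]$; (ii) $\alpha(\cdot,\omega)$ is right-continuous with left limits at every dyadic rational; (iii) $|\alpha(t,\omega)|=1$ for all $t\in[0,1]$ and $\int_0^1\alpha(t,\omega)\,dt=\alpha_0$.
   Context: Identify $\mathbb{R}^2$ with $\mathbb{C}$; $D$ denotes the set of dyadic rationals in $[0,1]$. For $k\ge1$ the Rademacher function $r_k:[0,1]\to\{-1,1\}$ is $r_k(t)=(-1)^{\lfloor 2^k t\rfloor}$ for $t<1$ and $r_k(1)=-1$. For $k\ge1$ and $j\in\{1,\dots,2^{k-1}\}$ let $I_{kj}=\left[\frac{j-1}{2^{k-1}},\frac{j}{2^{k-1}}\right)$ if $j<2^{k-1}$ and $I_{k,2^{k-1}}=\left[\frac{2^{k-1}-1}{2^{k-1}},1\right]$; $1_{I_{kj}}$ is its indicator. Let $(\Omega,\mathcal F,P)$ be the product probability space $\Omega=\prod_{k\ge1}\prod_{j=1}^{2^{k-1}}\{-1,1\}$, each factor uniform, with coordinate maps $d_{kj}:\Omega\to\{-1,1\}$.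 Let $(c_n)_{n\ge0}$ be a nondecreasing real sequence with $c_0\ge0$ and $c_1>0$, and set $\theta_k=\arcsin\sqrt{(c_k-c_{k-1})/c_k}$ for $k\ge1$. Fix $\alpha_0\in\mathbb{C}$ with $|\alpha_0|=\sqrt{c_0}$. For $n\ge1$ put $\Theta_n(t,\omega)=\sum_{k=1}^{n}\sum_{j=1}^{2^{k-1}}r_k(t)1_{I_{kj}}(t)d_{kj}(\omega)\theta_k$ and $\alpha_n(t,\omega)=\sqrt{c_n/c_0}\,\alpha_0\exp(i\Theta_n(t,\omega))$ if $c_0\neq0$, $\alpha_n(t,\omega)=\sqrt{c_n}\exp(i\Theta_n(t,\omega))$ if $c_0=0$. *)

(* Defs.v *)
From Stdlib Require Import Reals Lra ZArith.
Open Scope R_scope.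

Definition Cpx := (R * R)%type.
Definition Cmul (z w : Cpx) : Cpx :=
  (fst z * fst w - snd z * snd w, fst z * snd w + snd z * fst w).
Definition Cscal (a : R) (z : Cpx) : Cpx := (a * fst z, a * snd z).
Definition Csub (z w : Cpx) : Cpx := (fst z - fst w, snd z - snd w).
Definition Cnorm (z : Cpx) : R := sqrt (fst z * fst z + snd z * snd z).
Definition Cexpi (th : R) : Cpx := (cos th, sin th).

(** * The sample space: Omega = product of {-1,1} over the index pairs (k,j).
    Coordinates are encoded as booleans (true = 1, false = -1); the
    coordinates with k = 0 or j outside 1..2^(k-1) are dummy (unused). *)
Definition Omega := nat -> nat -> bool.
Definition d (k j : nat) (w : Omega) : R := if w k j then 1 else -1.

Definition dyadic (t : R) : Prop :=
  0 <= t <= 1 /\ exists m k : nat, t = INR m / 2 ^ k.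

Definition rad (k : nat) (t : R) : R :=
  if Rlt_dec t 1 then (if Z.even (Int_part (2 ^ k * t)) then 1 else -1) else -1.

Definition ind (k j : nat) (t : R) : R :=
  let N := Nat.pow 2 (k - 1) in
  if Nat.ltb j N then
    (if Rle_dec (INR (j - 1) / INR N) t then
       (if Rlt_dec t (INR j / INR N) then 1 else 0) else 0)
  else
    (if Rle_dec (INR (N - 1) / INR N) t then
       (if Rle_dec t 1 then 1 else 0) else 0).

Fixpoint sumR (f : nat -> R) (n : nat) : R :=
  match n with O => 0 | S m => sumR f m + f m end.

Definition theta (c : nat -> R) (k : nat) : R :=
  asin (sqrt ((c k - c (k - 1)%nat) / c k)).

Definition Theta (c : nat -> R) (n : nat) (t : R) (w : Omega) : R :=
  sumR (fun k' => let k := S k' in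
          sumR (fun j' => let j := S j' in
                  rad k t * ind k j t * d k j w * theta c k)
               (Nat.pow 2 (k - 1)))
       n.

Definition alpha_n (c : nat -> R) (alpha0 : Cpx) (n : nat) (t : R) (w : Omega) : Cpx :=
  if Req_EM_T (c O) 0 then Cscal (sqrt (c n)) (Cexpi (Theta c n t w))
  else Cscal (sqrt (c n / c O)) (Cmul alpha0 (Cexpi (Theta c n t w))).

Inductive sigma_gen {T : Type} (G : (T -> Prop) -> Prop) : (T -> Prop) -> Prop :=
  | sg_base A : G A -> sigma_gen G A
  | sg_full : sigma_gen G (fun _ => True)
  | sg_compl A : sigma_gen G A -> sigma_gen G (fun x => ~ A x)
  | sg_union (A : nat -> T -> Prop) :
      (forall n, sigma_gen G (A n)) -> sigma_gen G (fun x => exists n, A n x).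

Definition R_open (U : R -> Prop) : Prop :=
  forall x, U x -> exists eps, 0 < eps /\ forall y, Rabs (y - x) < eps -> U y.
Definition C_open (U : Cpx -> Prop) : Prop :=
  forall z, U z -> exists eps, 0 < eps /\ forall y, Cnorm (Csub y z) < eps -> U y.

Definition borel_R : (R -> Prop) -> Prop := sigma_gen R_open.
Definition borel_C : (Cpx -> Prop) -> Prop := sigma_gen C_open.

Definition cyl_sigma : (Omega -> Prop) -> Prop :=
  sigma_gen (fun B => exists k j, forall w, B w <-> w k j = true).

Definition prod_sigma : (R * Omega -> Prop) -> Prop :=
  sigma_gen (fun S => exists A B, borel_R A /\ cyl_sigma B /\
                       forall p, S p <-> (A (fst p) /\ B (snd p))).

(* Main.v *)
Require Import Defs.
From Stdlib Require Import Reals Lra Lia ZArith Classical List FunctionalExtensionality PropExtensionality.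
From Coquelicot Require Import Coquelicot.
Require Import Defs.
Open Scope R_scope.

Lemma sg_ext {T} (G : (T -> Prop) -> Prop) (A B : T -> Prop) :
  sigma_gen G A -> (forall x, A x <-> B x) -> sigma_gen G B.
Proof.
  intros HA HAB. assert (A = B) as <-; auto.
  apply functional_extensionality; intro x; apply propositional_extensionality; auto.
Qed.

Lemma sg_empty {T} (G : (T -> Prop) -> Prop) : sigma_gen G (fun _ => False).
Proof. eapply sg_ext. apply sg_compl, sg_full. simpl; tauto. Qed.

Lemma sg_const {T} (G : (T -> Prop) -> Prop) (P : Prop) : sigma_gen G (fun _ => P).
Proof.
  destruct (classic P) as [HP|HP].
  - eapply sg_ext. apply sg_full. tauto.
  - eapply sg_ext. apply sg_empty. tauto.
Qed.

Lemma sg_union2 {T} (G : (T -> Prop) -> Prop) A B :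
  sigma_gen G A -> sigma_gen G B -> sigma_gen G (fun x => A x \/ B x).
Proof.
  intros HA HB. eapply sg_ext.
  apply (sg_union G (fun n => match n with O => A | _ => B end)).
  intros [|n]; auto.
  intro x; split. intros [[|n] H]; auto. intros [H|H]. exists O; auto. exists 1%nat; auto.
Qed.

Lemma sg_inter {T} (G : (T -> Prop) -> Prop) (A : nat -> T -> Prop) :
  (forall n, sigma_gen G (A n)) -> sigma_gen G (fun x => forall n, A n x).
Proof.
  intros HA. eapply sg_ext.
  apply sg_compl. apply (sg_union G (fun n x => ~ A n x)). intro n; apply sg_compl, HA.
  intro x; split. intros H n. apply NNPP; intro Hn; apply H; eauto.
  intros H [n Hn]; auto.
Qed.

Lemma sg_inter2 {T} (G : (T -> Prop) -> Prop) A B :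
  sigma_gen G A -> sigma_gen G B -> sigma_gen G (fun x => A x /\ B x).
Proof.
  intros HA HB. eapply sg_ext.
  apply (sg_inter G (fun n => match n with O => A | _ => B end)).
  intros [|n]; auto.
  intro x; split. intros H; split; [apply (H O)|apply (H 1%nat)]. intros [H1 H2] [|n]; auto.
Qed.

Lemma sg_or_const {T} (G : (T -> Prop) -> Prop) (P : Prop) A :
  sigma_gen G A -> sigma_gen G (fun x => P \/ A x).
Proof. intros; apply sg_union2; auto; apply sg_const. Qed.

Lemma borel_pre {X} (G : (X -> Prop) -> Prop) (g : X -> Cpx) :
  (forall U, C_open U -> sigma_gen G (fun x => U (g x))) ->
  forall E, borel_C E -> sigma_gen G (fun x => E (g x)).
Proof.
  intros HU E HE. induction HE.
  - auto.
  - apply sg_full.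
  - apply sg_compl; auto.
  - apply (sg_union G (fun n x => A n (g x))); auto.
Qed.

Lemma inv_S_lt eps : 0 < eps -> exists k : nat, / INR (S k) < eps.
Proof.
  intros He. destruct (archimed (/ eps)) as [H1 _].
  assert (0 < / eps) by (apply Rinv_0_lt_compat; lra).
  destruct (up (/ eps)) as [|p|p] eqn:E.
  - simpl in H1; lra.
  - exists (Pos.to_nat p). rewrite S_INR, INR_IZR_INZ, positive_nat_Z.
    rewrite <- (Rinv_inv eps). apply Rinv_lt_contravar.
    apply Rmult_lt_0_compat; auto. pose proof (IZR_lt 0 (Z.pos p) ltac:(lia)); lra. lra.
  - pose proof (IZR_lt (Z.neg p) 0 ltac:(lia)); lra.
Qed.

Lemma lim_meas {X} (G : (X -> Prop) -> Prop) (fn : nat -> X -> R) (f : X -> R) :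
  (forall x, Un_cv (fun n => fn n x) (f x)) ->
  (forall n (P : R -> Prop), sigma_gen G (fun x => P (fn n x))) ->
  forall V, R_open V -> sigma_gen G (fun x => V (f x)).
Proof.
  intros Hcv Hm V HV.
  eapply sg_ext.
  - apply (sg_union G (fun k x => exists N, forall n, (N <= n)%nat ->
        forall y, Rabs (y - fn n x) < / INR (S k) -> V y)).
    intro k. apply (sg_union G (fun N x => forall n, (N <= n)%nat ->
        forall y, Rabs (y - fn n x) < / INR (S k) -> V y)).
    intro N. apply (sg_inter G (fun n x => (N <= n)%nat ->
        forall y, Rabs (y - fn n x) < / INR (S k) -> V y)).
    intro n. apply (Hm n (fun z => (N <= n)%nat -> forall y, Rabs (y - z) < / INR (S k) -> V y)).
  - intro x; simpl; split.
    + intros [k [N HN]].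
      assert (Hk : 0 < / INR (S k)) by (apply Rinv_0_lt_compat, lt_0_INR; lia).
      destruct (Hcv x _ Hk) as [N' HN'].
      apply (HN (max N N')). lia. specialize (HN' (max N N') ltac:(lia)).
      unfold R_dist in HN'. rewrite Rabs_minus_sym; auto.
    + intros Hx. destruct (HV _ Hx) as [eps [He Heps]].
      destruct (inv_S_lt (eps/2)) as [k Hk]. lra.
      assert (Hk0 : 0 < / INR (S k)) by (apply Rinv_0_lt_compat, lt_0_INR; lia).
      destruct (Hcv x _ Hk0) as [N HN]. exists k, N. intros n Hn y Hy.
      apply Heps. specialize (HN n Hn). unfold R_dist in HN.
      replace (y - f x) with ((y - fn n x) + (fn n x - f x)) by ring.
      eapply Rle_lt_trans. apply Rabs_triang. change (Rabs (y - fn n x) < / INR (S k)) in Hy. lra.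
Qed.

Definition upd (w : Omega) (k j : nat) (b : bool) : Omega :=
  fun k' j' => if andb (Nat.eqb k' k) (Nat.eqb j' j) then b else w k' j'.

Lemma cyl_fin (L : list (nat * nat)) : forall (Q : Omega -> Prop),
  (forall w w', (forall k j, In (k, j) L -> w k j = w' k j) -> (Q w <-> Q w')) ->
  cyl_sigma Q.
Proof.
  induction L as [|[k j] L IH]; intros Q HQ.
  - eapply sg_ext. apply (sg_const _ (Q (fun _ _ => true))).
    intro w; apply HQ; simpl; tauto.
  - eapply sg_ext.
    + apply sg_union2; apply sg_inter2.
      * apply sg_base. exists k, j. intro w; apply iff_refl.
      * apply (IH (fun w => Q (upd w k j true))).
        intros w w' H. apply HQ. intros k' j' Hin. unfold upd.
        destruct (Nat.eqb k' k && Nat.eqb j' j)%bool eqn:E; auto.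
        destruct Hin as [Hin|Hin]. inversion Hin; subst.
        rewrite !Nat.eqb_refl in E; discriminate. auto.
      * apply sg_compl. apply sg_base. exists k, j. intro w; apply iff_refl.
      * apply (IH (fun w => Q (upd w k j false))).
        intros w w' H. apply HQ. intros k' j' Hin. unfold upd.
        destruct (Nat.eqb k' k && Nat.eqb j' j)%bool eqn:E; auto.
        destruct Hin as [Hin|Hin]. inversion Hin; subst.
        rewrite !Nat.eqb_refl in E; discriminate. auto.
    + intro w; simpl.
      assert (Hu : forall b, w k j = b -> (Q (upd w k j b) <-> Q w)).
      { intros b Hb. apply HQ. intros k' j' _. unfold upd.
        destruct (Nat.eqb k' k) eqn:E1; destruct (Nat.eqb j' j) eqn:E2; simpl; auto.
        apply Nat.eqb_eq in E1; apply Nat.eqb_eq in E2; subst; auto. }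
      pose proof (Hu (w k j) eq_refl) as Hw. clear Hu.
      destruct (w k j) eqn:Ew.
      * rewrite Hw. split. intros [[_ H]|[H _]]; auto. congruence. tauto.
      * rewrite Hw. split. intros [[H _]|[_ H]]; auto. discriminate. intro H; right; split; auto.
Qed.

Definition fl (n : nat) (t : R) : nat :=
  if Rlt_dec t 1 then Z.to_nat (Int_part (2 ^ n * t)) else Nat.pred (Nat.pow 2 n).

Lemma pow2_pos n : (0 < Nat.pow 2 n)%nat.
Proof. apply Nat.neq_0_lt_0, Nat.pow_nonzero; lia. Qed.

Lemma INR_pow2 n : INR (Nat.pow 2 n) = 2 ^ n.
Proof. rewrite pow_INR. f_equal. Qed.

Lemma pow2_gt0 n : 0 < 2 ^ n.
Proof. apply pow_lt; lra. Qed.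

Lemma pow2_S n : Nat.pow 2 (S n) = (2 * Nat.pow 2 n)%nat.
Proof. reflexivity. Qed.

Lemma Int_part_unique x z : IZR z <= x < IZR z + 1 -> Int_part x = z.
Proof.
  intros [H1 H2]. unfold Int_part.
  rewrite <- (tech_up x (z + 1)); [ring| rewrite plus_IZR; lra | rewrite plus_IZR; lra].
Qed.

Lemma floor_nat_unique x a b :
  INR a <= x < INR a + 1 -> INR b <= x < INR b + 1 -> a = b.
Proof.
  intros [H1 H2] [H3 H4].
  assert (a < S b)%nat by (apply INR_lt; rewrite S_INR; lra).
  assert (b < S a)%nat by (apply INR_lt; rewrite S_INR; lra).
  lia.
Qed.

Lemma fl_spec n t : 0 <= t < 1 ->
  INR (fl n t) <= 2 ^ n * t < INR (fl n t) + 1 /\ (fl n t < Nat.pow 2 n)%nat.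
Proof.
  intros [H0 H1]. unfold fl. destruct (Rlt_dec t 1) as [_|]; [|lra].
  pose proof (base_Int_part (2 ^ n * t)) as [B1 B2].
  pose proof (pow2_gt0 n).
  assert (Hz : (0 <= Int_part (2 ^ n * t))%Z).
  { apply le_IZR. assert (IZR (Int_part (2 ^ n * t)) > -1) by nra.
    assert (-1 < Int_part (2 ^ n * t))%Z by (apply lt_IZR; simpl; lra). apply IZR_le; lia. }
  rewrite INR_IZR_INZ, Z2Nat.id by auto.
  assert (Hf: IZR (Int_part (2 ^ n * t)) <= 2 ^ n * t < IZR (Int_part (2 ^ n * t)) + 1) by lra.
  split; auto.
  apply INR_lt. rewrite INR_pow2, INR_IZR_INZ, Z2Nat.id by auto. nra.
Qed.

Lemma fl_neg n t : t < 0 -> fl n t = O.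
Proof.
  intros H. unfold fl. destruct (Rlt_dec t 1) as [_|]; [|lra].
  pose proof (base_Int_part (2 ^ n * t)) as [B1 B2].
  pose proof (pow2_gt0 n).
  assert (Int_part (2 ^ n * t) < 0)%Z by (apply lt_IZR; simpl; nra).
  destruct (Int_part (2 ^ n * t)); simpl; auto; lia.
Qed.

Lemma fl_ge1 n t : 1 <= t -> fl n t = Nat.pred (Nat.pow 2 n).
Proof. intros H. unfold fl. destruct (Rlt_dec t 1); [lra|auto]. Qed.

Lemma fl_lt n t : (fl n t < Nat.pow 2 n)%nat.
Proof.
  pose proof (pow2_pos n).
  destruct (Rlt_dec t 0). rewrite fl_neg; auto.
  destruct (Rlt_dec t 1). apply fl_spec; lra.
  rewrite fl_ge1; lra || lia.
Qed.

Lemma fl_eq_of n t m : 0 <= t < 1 -> INR m <= 2 ^ n * t < INR m + 1 -> fl n t = m.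
Proof.
  intros Ht Hm. destruct (fl_spec n t Ht) as [Hs _]. eapply floor_nat_unique; eauto.
Qed.

Lemma fl_half n t : fl n t = Nat.div (fl (S n) t) 2.
Proof.
  pose proof (pow2_pos n).
  destruct (Rlt_dec t 0) as [Hneg|Hneg]. rewrite !fl_neg; auto.
  destruct (Rlt_dec t 1) as [Hlt1|Hlt1].
  - destruct (fl_spec (S n) t ltac:(lra)) as [[H1 H2] _].
    set (M := fl (S n) t) in *.
    pose proof (Nat.div_mod M 2 ltac:(lia)) as HM.
    pose proof (Nat.mod_upper_bound M 2 ltac:(lia)) as HM2.
    set (q := (M / 2)%nat) in *. set (r := (M mod 2)%nat) in *.
    apply fl_eq_of. lra.
    assert (INR M = 2 * INR q + INR r) by (rewrite HM, plus_INR, mult_INR; simpl; ring).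
    assert (INR r < 2) by (apply (lt_INR r 2) in HM2; simpl in HM2; lra).
    pose proof (pos_INR r).
    simpl in H1, H2. assert (INR r <= 1) by (apply (le_INR r 1); lia). simpl in H1, H2.
    replace (2 * 2 ^ n * t) with (2 * (2 ^ n * t)) in * by ring. split; lra.
  - rewrite !fl_ge1 by lra. rewrite pow2_S.
    apply Nat.div_unique with (r := 1%nat); lia.
Qed.

Definition sgn (m : nat) : R := if Nat.even m then 1 else -1.

Lemma even_Z n : Nat.even n = Z.even (Z.of_nat n).
Proof.
  induction n. reflexivity.
  rewrite Nat2Z.inj_succ, Z.even_succ, Nat.even_succ, <- Nat.negb_even, <- Z.negb_even, IHn; auto.
Qed.

Lemma div_le_iff a b t : 0 < b -> (a / b <= t <-> a <= b * t).
Proof.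
  intros Hb. split; intro H.
  - replace a with (b * (a / b)) by (field; lra). apply Rmult_le_compat_l; lra.
  - replace t with ((b * t) / b) by (field; lra). unfold Rdiv. apply Rmult_le_compat_r; auto.
    left; apply Rinv_0_lt_compat; auto.
Qed.

Lemma div_lt_iff a b t : 0 < b -> (t < a / b <-> b * t < a).
Proof.
  intros Hb. split; intro H.
  - replace a with (b * (a / b)) by (field; lra). apply Rmult_lt_compat_l; lra.
  - replace t with ((b * t) / b) by (field; lra). unfold Rdiv. apply Rmult_lt_compat_r; auto.
    apply Rinv_0_lt_compat; auto.
Qed.

Lemma Int_part_nonneg x : 0 <= x -> (0 <= Int_part x)%Z.
Proof.
  intros H. pose proof (base_Int_part x) as [B1 B2].
  assert (-1 < Int_part x)%Z by (apply lt_IZR; simpl; lra). lia.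
Qed.

Lemma even_pred_pow2 k : (1 <= k)%nat -> Nat.even (Nat.pred (Nat.pow 2 k)) = false.
Proof.
  intros Hk. destruct k as [|k]; [lia|]. rewrite pow2_S.
  pose proof (pow2_pos k).
  replace (Nat.pred (2 * Nat.pow 2 k)) with (2 * (Nat.pow 2 k - 1) + 1)%nat by lia.
  apply Nat.even_odd.
Qed.

Lemma rad_fl k t : (1 <= k)%nat -> 0 <= t <= 1 -> rad k t = sgn (fl k t).
Proof.
  intros Hk Ht. unfold rad, sgn, fl.
  destruct (Rlt_dec t 1) as [H1|H1].
  - pose proof (pow2_gt0 k).
    assert (Hz := Int_part_nonneg (2 ^ k * t) ltac:(nra)).
    rewrite even_Z, Z2Nat.id by auto. reflexivity.
  - rewrite even_pred_pow2; auto.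
Qed.

Lemma ind_fl n j' t : 0 <= t <= 1 -> (j' < Nat.pow 2 n)%nat ->
  ind (S n) (S j') t = if Nat.eqb j' (fl n t) then 1 else 0.
Proof.
  intros Ht Hj. unfold ind. cbv zeta.
  replace (S n - 1)%nat with n by lia.
  pose proof (pow2_gt0 n) as Hp. pose proof (pow2_pos n) as Hpn.
  rewrite INR_pow2. replace (S j' - 1)%nat with j' by lia.
  rewrite minus_INR by lia. rewrite INR_pow2. rewrite S_INR. change (INR 1) with 1.
  pose proof (fl_lt n t) as Hfl.
  destruct (Nat.ltb (S j') (Nat.pow 2 n)) eqn:E.
  - apply Nat.ltb_lt in E.
    destruct (Nat.eqb j' (fl n t)) eqn:Ej.
    + apply Nat.eqb_eq in Ej.
      assert (t < 1).
      { destruct (Rlt_dec t 1); auto. rewrite fl_ge1 in Ej by lra. lia. }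
      destruct (fl_spec n t ltac:(lra)) as [[F1 F2] _]. rewrite <- Ej in F1, F2.
      destruct (Rle_dec (INR j' / 2 ^ n) t) as [|C]; [|exfalso; apply C, div_le_iff; auto].
      destruct (Rlt_dec t ((INR j' + 1) / 2 ^ n)) as [|C]; [auto|exfalso; apply C, div_lt_iff; auto].
    + apply Nat.eqb_neq in Ej.
      destruct (Rle_dec (INR j' / 2 ^ n) t) as [C1|]; auto.
      destruct (Rlt_dec t ((INR j' + 1) / 2 ^ n)) as [C2|]; auto.
      apply div_le_iff in C1; auto. apply div_lt_iff in C2; auto.
      exfalso. apply Ej. symmetry. apply fl_eq_of; [|lra].
      split. lra. apply (lt_INR _ _) in E. rewrite S_INR, INR_pow2 in E. nra.
  - apply Nat.ltb_ge in E. assert (Hj2 : j' = Nat.pred (Nat.pow 2 n)) by lia.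
    destruct (Nat.eqb j' (fl n t)) eqn:Ej.
    + apply Nat.eqb_eq in Ej.
      destruct (Rle_dec ((2 ^ n - 1) / 2 ^ n) t) as [|C].
      * destruct (Rle_dec t 1); [auto|lra].
      * exfalso; apply C, div_le_iff; auto.
        destruct (Rlt_dec t 1).
        -- destruct (fl_spec n t ltac:(lra)) as [[F1 F2] _]. rewrite <- Ej, Hj2 in F1.
           rewrite <- INR_pow2 in F1 |- *. replace (Nat.pred (Nat.pow 2 n)) with (Nat.pow 2 n - 1)%nat in F1 by lia. rewrite minus_INR in F1 by lia. simpl in F1. lra.
        -- nra.
    + apply Nat.eqb_neq in Ej.
      destruct (Rle_dec ((2 ^ n - 1) / 2 ^ n) t) as [C1|]; auto.
      destruct (Rle_dec t 1); auto. exfalso.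
      apply div_le_iff in C1; auto.
      destruct (Rlt_dec t 1).
      * destruct (fl_spec n t ltac:(lra)) as [[F1 F2] _].
        assert (fl n t + 2 <= Nat.pow 2 n)%nat by lia.
        apply le_INR in H. rewrite plus_INR, INR_pow2 in H. simpl in H. lra.
      * rewrite fl_ge1 in Ej by lra. lia.
Qed.

Fixpoint Gd (c : nat -> R) (n m : nat) (w : Omega) : R :=
  match n with
  | O => 0
  | S n' => Gd c n' (Nat.div m 2) w + sgn m * d (S n') (S (Nat.div m 2)) w * theta c (S n')
  end.

Definition HH c n t w := Gd c n (fl n t) w.

Lemma H_S c n t w :
  HH c (S n) t w = HH c n t w + sgn (fl (S n) t) * d (S n) (S (fl n t)) w * theta c (S n).
Proof. unfold HH. cbn [Gd]. rewrite <- fl_half. reflexivity. Qed.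

Lemma sumR_ext f g N : (forall j, (j < N)%nat -> f j = g j) -> sumR f N = sumR g N.
Proof.
  induction N; intros Hfg; simpl; auto. rewrite IHN, Hfg; auto.
Qed.

Lemma sumR_pick f q N : (q < N)%nat ->
  sumR (fun j => if Nat.eqb j q then f j else 0) N = f q.
Proof.
  induction N; intros Hq. lia. simpl.
  destruct (Nat.eqb N q) eqn:E.
  - apply Nat.eqb_eq in E; subst.
    rewrite (sumR_ext _ (fun _ => 0)). clear. induction q; simpl; auto; lra.
    intros j Hj. destruct (Nat.eqb j q) eqn:E; auto. apply Nat.eqb_eq in E; lia.
  - apply Nat.eqb_neq in E. rewrite IHN; lia || lra.
Qed.

Lemma Theta_H c n t w : 0 <= t <= 1 -> Theta c n t w = HH c n t w.
Proof.
  intros Ht. induction n.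
  - reflexivity.
  - rewrite H_S, <- IHn. unfold Theta. cbn [sumR]. f_equal.
    cbv zeta. replace (S n - 1)%nat with n by lia.
    rewrite (sumR_ext _ (fun j => if Nat.eqb j (fl n t) then
          sgn (fl (S n) t) * d (S n) (S j) w * theta c (S n) else 0)).
    + apply sumR_pick, fl_lt.
    + intros j Hj. rewrite ind_fl, rad_fl; auto; try lia.
      destruct (Nat.eqb j (fl n t)); ring.
Qed.

Lemma c_mono_le c (hmono : forall n, c n <= c (S n)) m n : (m <= n)%nat -> c m <= c n.
Proof. induction 1. lra. eapply Rle_trans; eauto. Qed.

Lemma asin_nonneg x : 0 <= x <= 1 -> 0 <= asin x.
Proof.
  intros Hx. destruct (Rle_dec 0 (asin x)) as [|C]; auto. exfalso.
  pose proof (asin_bound x). pose proof PI_RGT_0.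
  assert (Hs : sin (asin x) < 0) by (apply sin_lt_0_var; lra).
  rewrite sin_asin in Hs; lra.
Qed.

Lemma asin_le3 x : 0 <= x <= 1 -> asin x <= 3 * x.
Proof.
  intros Hx. pose proof (asin_nonneg x Hx) as H0. pose proof (asin_bound x) as [_ H1].
  pose proof PI_4. pose proof PI_RGT_0.
  set (y := asin x) in *.
  destruct (sin_bound y 0 H0 ltac:(lra)) as [Hs _].
  replace (sin_approx y (2 * 0 + 1)) with (y - y^3/6) in Hs
    by (unfold sin_approx, sin_term; simpl; field).
  unfold y in Hs; rewrite sin_asin in Hs by lra. fold y in Hs.
  assert (y <= 2) by lra. nra.
Qed.

Lemma theta_nonneg c (hmono : forall n, c n <= c (S n)) (hc0 : 0 <= c O) (hc1 : 0 < c 1%nat) k :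
  0 <= theta c (S k) <= 3 / sqrt (c 1%nat) * sqrt (c (S k) - c k).
Proof.
  unfold theta. replace (S k - 1)%nat with k by lia.
  assert (H1 : c 1%nat <= c (S k)) by (apply c_mono_le; auto; lia).
  assert (H0 : 0 <= c k) by (apply (Rle_trans _ (c O)); auto; apply c_mono_le; auto; lia).
  pose proof (hmono k).
  assert (Hr : 0 <= (c (S k) - c k) / c (S k) <= 1).
  { split. unfold Rdiv; apply Rmult_le_pos; [lra|left; apply Rinv_0_lt_compat; lra]. apply div_le_iff; lra. }
  assert (Hx : 0 <= sqrt ((c (S k) - c k) / c (S k)) <= 1).
  { split. apply sqrt_pos. rewrite <- sqrt_1. apply sqrt_le_1_alt; lra. }
  split. apply asin_nonneg; auto.
  eapply Rle_trans. apply asin_le3; auto.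
  rewrite sqrt_div_alt by lra.
  assert (0 < sqrt (c 1%nat)) by (apply sqrt_lt_R0; lra).
  assert (sqrt (c 1%nat) <= sqrt (c (S k))) by (apply sqrt_le_1_alt; lra).
  pose proof (sqrt_pos (c (S k) - c k)).
  apply Rle_trans with (3 * (sqrt (c (S k) - c k) / sqrt (c 1%nat))).
  apply Rmult_le_compat_l; [lra|]. unfold Rdiv. apply Rmult_le_compat_l; auto.
  apply Rinv_le_contravar; lra. right; field; lra.
Qed.

Definition Stheta c N := sumR (fun k => theta c (S k)) N.

Lemma sumR_f_R0 f N : sumR f (S N) = sum_f_R0 f N.
Proof. induction N. simpl; ring. change (sumR f (S (S N))) with (sumR f (S N) + f (S N)). rewrite IHN. reflexivity. Qed.

Lemma lim_abs_le u l a b N : Un_cv u l -> (forall n, (N <= n)%nat -> Rabs (u n - a) <= b) ->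
  Rabs (l - a) <= b.
Proof.
  intros Hu Hb. destruct (Rle_dec (Rabs (l - a)) b) as [|C]; auto. exfalso.
  destruct (Hu (Rabs (l - a) - b)) as [M HM]. lra.
  specialize (HM (max N M) ltac:(lia)). specialize (Hb (max N M) ltac:(lia)).
  unfold R_dist in HM.
  pose proof (Rabs_triang (l - u (max N M)) (u (max N M) - a)).
  replace (l - u (max N M) + (u (max N M) - a)) with (l - a) in H by ring.
  rewrite Rabs_minus_sym in HM. lra.
Qed.

Lemma sgn_d_abs m k j w x : 0 <= x -> Rabs (sgn m * d k j w * x) = x.
Proof.
  intros Hx. unfold sgn, d. destruct (Nat.even m); destruct (w k j);
  rewrite !Rabs_mult, ?Rabs_R1, (Rabs_right x), ?Rabs_left; lra.
Qed.

Lemma Th_ex c (hmono : forall n, c n <= c (S n)) (hc0 : 0 <= c O) (hc1 : 0 < c 1%nat)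
  (hsum : exists l, Un_cv (fun N => sum_f_R0 (fun n => sqrt (c (S n) - c n)) N) l) :
  exists (Th : R -> Omega -> R) (tl : nat -> R),
    (forall t w, Un_cv (fun n => HH c n t w) (Th t w)) /\
    (forall N t w, Rabs (Th t w - HH c N t w) <= tl N) /\ Un_cv tl 0.
Proof.
  destruct hsum as [l Hl].
  set (g := fun n => sqrt (c (S n) - c n)).
  assert (Hg : forall n, 0 <= g n) by (intro; apply sqrt_pos).
  assert (Hgl : forall N, sumR g N <= l).
  { assert (Hgr : Un_growing (fun N => sum_f_R0 g N)).
    { intro n. simpl. specialize (Hg (S n)). lra. }
    intros [|N]. simpl. eapply Rle_trans; [apply (Hg O)|].
    apply (growing_ineq _ l Hgr Hl O).
    rewrite sumR_f_R0. apply (growing_ineq _ l Hgr Hl N). }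
  set (K := 3 / sqrt (c 1%nat)).
  assert (HK : 0 <= K). { unfold K. assert (0 < sqrt (c 1%nat)) by (apply sqrt_lt_R0; lra).
    unfold Rdiv. apply Rmult_le_pos; [lra|]. left; apply Rinv_0_lt_compat; auto. }
  assert (Hgrow : Un_growing (Stheta c)).
  { intro n. unfold Stheta. simpl. pose proof (theta_nonneg c hmono hc0 hc1 n). lra. }
  assert (Hub : forall N, Stheta c N <= K * l).
  { intro N. apply Rle_trans with (K * sumR g N).
    - induction N. unfold Stheta; simpl; rewrite Rmult_0_r; lra. unfold Stheta in *. simpl. rewrite Rmult_plus_distr_l.
      pose proof (theta_nonneg c hmono hc0 hc1 N). fold K in H. unfold g at 2. lra.
    - apply Rmult_le_compat_l; auto. }
  destruct (growing_cv (Stheta c) Hgrow) as [Lt HLt].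
  { exists (K * l). intros x [n ->]. auto. }
  assert (Hdiff : forall N n t w, (N <= n)%nat ->
     Rabs (HH c n t w - HH c N t w) <= Stheta c n - Stheta c N).
  { intros N n t w Hn. induction Hn.
    - rewrite Rminus_diag, Rabs_R0. lra.
    - rewrite H_S. unfold Stheta in *. simpl.
      replace (HH c m t w + sgn (fl (S m) t) * d (S m) (S (fl m t)) w * theta c (S m) - HH c N t w)
        with ((HH c m t w - HH c N t w) + sgn (fl (S m) t) * d (S m) (S (fl m t)) w * theta c (S m)) by ring.
      eapply Rle_trans. apply Rabs_triang. rewrite sgn_d_abs. lra.
      apply (theta_nonneg c hmono hc0 hc1). }
  assert (HSc : Cauchy_crit (Stheta c)) by (apply CV_Cauchy; exists Lt; auto).
  assert (Hcau : forall t w, Cauchy_crit (fun n => HH c n t w)).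
  { intros t w eps He. destruct (HSc eps He) as [N HN]. exists N. intros n m Hn Hm.
    specialize (HN n m Hn Hm). unfold Rdist in *.
    destruct (le_ge_dec n m) as [Hnm|Hnm].
    - pose proof (Hdiff n m t w Hnm) as Hd. rewrite Rabs_minus_sym.
      rewrite Rabs_minus_sym in HN. rewrite Rabs_right in HN; [lra|].
      pose proof (Rabs_pos (HH c m t w - HH c n t w)) as Hq. lra.
    - pose proof (Hdiff m n t w Hnm) as Hd. rewrite Rabs_right in HN; [lra|].
      pose proof (Rabs_pos (HH c n t w - HH c m t w)) as Hq. lra. }
  exists (fun t w => proj1_sig (Rcomplete.R_complete _ (Hcau t w))).
  exists (fun N => Lt - Stheta c N).
  split; [|split].
  - intros t w. apply (proj2_sig (Rcomplete.R_complete _ (Hcau t w))).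
  - intros N t w. apply (lim_abs_le (fun n => HH c n t w) _ _ _ N).
    apply (proj2_sig (Rcomplete.R_complete _ (Hcau t w))).
    intros n Hn. eapply Rle_trans. apply Hdiff; auto.
    pose proof (growing_ineq _ _ Hgrow HLt n). lra.
  - intros eps He. destruct (HLt eps He) as [N HN]. exists N. intros n Hn.
    specialize (HN n Hn). unfold R_dist in *. rewrite Rabs_minus_sym in HN.
    replace (Lt - Stheta c n - 0) with (Lt - Stheta c n) by ring. auto.
Qed.

Definition hN c a0 n x : Cpx :=
  if Req_EM_T (c O) 0 then Cscal (sqrt (c n)) (Cexpi x)
  else Cscal (sqrt (c n / c O)) (Cmul a0 (Cexpi x)).
Definition hL c a0 x : Cpx :=
  if Req_EM_T (c O) 0 then Cexpi x
  else Cscal (sqrt (1 / c O)) (Cmul a0 (Cexpi x)).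

Lemma alpha_n_hN c a0 n t w : alpha_n c a0 n t w = hN c a0 n (Theta c n t w).
Proof. reflexivity. Qed.

Lemma Cnorm_le z : Cnorm z <= Rabs (fst z) + Rabs (snd z).
Proof.
  unfold Cnorm. rewrite <- (sqrt_Rsqr (Rabs (fst z) + Rabs (snd z))).
  apply sqrt_le_1_alt. unfold Rsqr.
  destruct (Rcase_abs (fst z)); destruct (Rcase_abs (snd z));
  rewrite ?(Rabs_left (fst z)), ?(Rabs_right (fst z)), ?(Rabs_left (snd z)), ?(Rabs_right (snd z)) by lra; nra.
  pose proof (Rabs_pos (fst z)). pose proof (Rabs_pos (snd z)). lra.
Qed.

Lemma Cnorm_pos z : 0 <= Cnorm z.
Proof. apply sqrt_pos. Qed.

Lemma Cnorm_sub_self z : Cnorm (Csub z z) = 0.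
Proof. unfold Cnorm, Csub; simpl. replace (_ * _ + _ * _) with 0 by ring. apply sqrt_0. Qed.

Lemma Cnorm_triang z1 z2 z3 : Cnorm (Csub z1 z3) <= Cnorm (Csub z1 z2) + Cnorm (Csub z2 z3).
Proof.
  unfold Cnorm, Csub; simpl.
  set (a := fst z1 - fst z2). set (b := snd z1 - snd z2).
  set (u := fst z2 - fst z3). set (v := snd z2 - snd z3).
  replace (fst z1 - fst z3) with (a + u) by (unfold a, u; ring).
  replace (snd z1 - snd z3) with (b + v) by (unfold b, v; ring).
  pose proof (sqrt_pos (a * a + b * b)). pose proof (sqrt_pos (u * u + v * v)).
  rewrite <- (sqrt_Rsqr (sqrt (a * a + b * b) + sqrt (u * u + v * v))) by lra.
  apply sqrt_le_1_alt. unfold Rsqr.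
  replace ((sqrt (a * a + b * b) + sqrt (u * u + v * v)) * (sqrt (a * a + b * b) + sqrt (u * u + v * v)))
    with (sqrt (a * a + b * b) * sqrt (a * a + b * b) + sqrt (u * u + v * v) * sqrt (u * u + v * v)
          + 2 * (sqrt (a * a + b * b) * sqrt (u * u + v * v))) by ring.
  rewrite !sqrt_sqrt by nra. rewrite <- sqrt_mult by nra.
  assert (a * u + b * v <= sqrt ((a * a + b * b) * (u * u + v * v))).
  { destruct (Rle_dec (a * u + b * v) 0). pose proof (sqrt_pos ((a * a + b * b) * (u * u + v * v))); lra.
    rewrite <- (sqrt_Rsqr (a * u + b * v)) by lra. apply sqrt_le_1_alt. unfold Rsqr.
    pose proof (Rle_0_sqr (a * v - b * u)). unfold Rsqr in *. nra. }
  nra.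
Qed.

Lemma Rabs_sin_le u : Rabs (sin u) <= Rabs u.
Proof.
  assert (Hp : forall u, 0 < u -> Rabs (sin u) <= u).
  { intros x Hx. pose proof (sin_lt_x x Hx). pose proof (SIN_bound x).
    destruct (Rle_dec 1 x). apply Rabs_le; lra.
    pose proof PI_RGT_0. pose proof PI2_3_2.
    assert (0 <= sin x) by (apply sin_ge_0; lra). rewrite Rabs_right; lra. }
  destruct (Rtotal_order u 0) as [Hu|[Hu|Hu]].
  - rewrite (Rabs_left u) by lra. rewrite <- (Rabs_Ropp (sin u)), <- sin_neg. apply Hp; lra.
  - subst; rewrite sin_0, Rabs_R0; lra.
  - rewrite (Rabs_right u) by lra; auto.
Qed.

Lemma cos_lip x y : Rabs (cos x - cos y) <= Rabs (x - y).
Proof.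
  rewrite form2. rewrite !Rabs_mult.
  pose proof (Rabs_sin_le ((x - y) / 2)). pose proof (SIN_bound ((x + y) / 2)).
  assert (Rabs (sin ((x + y) / 2)) <= 1) by (apply Rabs_le; lra).
  replace (Rabs ((x - y) / 2)) with (Rabs (x - y) / 2) in H
    by (unfold Rdiv; rewrite Rabs_mult, (Rabs_right (/ 2)); lra).
  rewrite Rabs_left by lra.
  pose proof (Rabs_pos (sin ((x - y) / 2))). pose proof (Rabs_pos (sin ((x + y) / 2))).
  nra.
Qed.

Lemma sin_lip x y : Rabs (sin x - sin y) <= Rabs (x - y).
Proof.
  rewrite form4. rewrite !Rabs_mult.
  pose proof (Rabs_sin_le ((x - y) / 2)). pose proof (COS_bound ((x + y) / 2)).
  assert (Rabs (cos ((x + y) / 2)) <= 1) by (apply Rabs_le; lra).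
  replace (Rabs ((x - y) / 2)) with (Rabs (x - y) / 2) in H
    by (unfold Rdiv; rewrite Rabs_mult, (Rabs_right (/ 2)); lra).
  rewrite (Rabs_right 2) by lra.
  pose proof (Rabs_pos (sin ((x - y) / 2))). pose proof (Rabs_pos (cos ((x + y) / 2))).
  nra.
Qed.

Lemma lin_bound a1 a2 u v B : Rabs u <= B -> Rabs v <= B ->
  Rabs (a1 * u + a2 * v) <= (Rabs a1 + Rabs a2) * B.
Proof.
  intros Hu Hv. eapply Rle_trans. apply Rabs_triang. rewrite !Rabs_mult.
  pose proof (Rabs_pos a1). pose proof (Rabs_pos a2).
  apply Rle_trans with (Rabs a1 * B + Rabs a2 * B).
  apply Rplus_le_compat; apply Rmult_le_compat_l; auto. lra.
Qed.

Lemma a0_norm (a0 : Cpx) c0 : Cnorm a0 = sqrt c0 -> 0 <= c0 -> fst a0 * fst a0 + snd a0 * snd a0 = c0.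
Proof.
  unfold Cnorm. intros H Hc. rewrite <- (sqrt_sqrt (fst a0 * fst a0 + snd a0 * snd a0)) by nra.
  rewrite H. apply sqrt_sqrt; auto.
Qed.

Lemma hL_norm c a0 x : Cnorm a0 = sqrt (c O) -> 0 <= c O -> Cnorm (hL c a0 x) = 1.
Proof.
  intros Ha Hc. pose proof (a0_norm a0 (c O) Ha Hc) as Hn. unfold hL, Cnorm.
  pose proof (sin2_cos2 x) as Hsc. unfold Rsqr in Hsc.
  destruct (Req_EM_T (c O) 0) as [E|E]; unfold Cexpi, Cscal, Cmul; simpl.
  - match goal with |- sqrt ?X = 1 => replace X with 1; [apply sqrt_1|] end. lra.
  - match goal with |- sqrt ?X = 1 => replace X with 1; [apply sqrt_1|] end. symmetry.
    set (s := sqrt (1 / c O)).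
    assert (Hs : s * s = 1 / c O) by (apply sqrt_sqrt; unfold Rdiv; apply Rmult_le_pos; [lra|left; apply Rinv_0_lt_compat; lra]).
    transitivity (s * s * ((fst a0 * fst a0 + snd a0 * snd a0) * (cos x * cos x + sin x * sin x))).
    ring. rewrite Hs, Hn. rewrite (Rplus_comm (cos x * cos x)), Hsc. field. auto.
Qed.

Lemma Cnorm_diff_bound (p q a1 a2 x y : R) :
  Cnorm (Csub (Cscal p (Cmul (a1, a2) (Cexpi x))) (Cscal q (Cmul (a1, a2) (Cexpi y))))
  <= 2 * (Rabs a1 + Rabs a2) * (Rabs (p - q) + Rabs q * Rabs (x - y)).
Proof.
  eapply Rle_trans. apply Cnorm_le. unfold Csub, Cscal, Cmul, Cexpi; simpl.
  pose proof (cos_lip x y). pose proof (sin_lip x y).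
  pose proof (COS_bound x). pose proof (SIN_bound x).
  assert (Hc : Rabs (cos x) <= 1) by (apply Rabs_le; lra).
  assert (Hs : Rabs (sin x) <= 1) by (apply Rabs_le; lra).
  set (A := Rabs a1 + Rabs a2).
  assert (HA : 0 <= A) by (unfold A; pose proof (Rabs_pos a1); pose proof (Rabs_pos a2); lra).
  assert (E1 : forall u1 v1 u2 v2, Rabs u1 <= 1 -> Rabs v1 <= 1 ->
     Rabs (u1 - u2) <= Rabs (x - y) -> Rabs (v1 - v2) <= Rabs (x - y) ->
     Rabs (p * (a1 * u1 + a2 * v1) - q * (a1 * u2 + a2 * v2)) <= A * (Rabs (p - q) + Rabs q * Rabs (x - y))).
  { intros u1 v1 u2 v2 Hu1 Hv1 Hu Hv.
    replace (p * (a1 * u1 + a2 * v1) - q * (a1 * u2 + a2 * v2))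
      with ((p - q) * (a1 * u1 + a2 * v1) + q * (a1 * (u1 - u2) + a2 * (v1 - v2))) by ring.
    eapply Rle_trans. apply Rabs_triang. rewrite !Rabs_mult.
    pose proof (lin_bound a1 a2 u1 v1 1 Hu1 Hv1).
    pose proof (lin_bound a1 a2 _ _ _ Hu Hv). fold A in H3, H4.
    pose proof (Rabs_pos (p - q)). pose proof (Rabs_pos q).
    apply Rle_trans with (Rabs (p - q) * (A * 1) + Rabs q * (A * Rabs (x - y))).
    apply Rplus_le_compat; apply Rmult_le_compat_l; auto. lra. }
  specialize (E1 (cos x) (- sin x) (cos y) (- sin y)).
  pose proof (E1 Hc ltac:(rewrite Rabs_Ropp; auto) H ltac:(replace (- sin x - - sin y) with (-(sin x - sin y)) by ring; rewrite Rabs_Ropp; auto)) as E2.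
  clear E1.
  assert (E3 : Rabs (p * (a1 * sin x + a2 * cos x) - q * (a1 * sin y + a2 * cos y)) <= A * (Rabs (p - q) + Rabs q * Rabs (x - y))).
  { replace (p * (a1 * sin x + a2 * cos x) - q * (a1 * sin y + a2 * cos y))
      with ((p - q) * (a1 * sin x + a2 * cos x) + q * (a1 * (sin x - sin y) + a2 * (cos x - cos y))) by ring.
    eapply Rle_trans. apply Rabs_triang. rewrite !Rabs_mult.
    pose proof (lin_bound a1 a2 _ _ 1 Hs Hc).
    pose proof (lin_bound a1 a2 _ _ _ H0 H). fold A in H3, H4.
    pose proof (Rabs_pos (p - q)). pose proof (Rabs_pos q).
    apply Rle_trans with (Rabs (p - q) * (A * 1) + Rabs q * (A * Rabs (x - y))).
    apply Rplus_le_compat; apply Rmult_le_compat_l; auto. lra. }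
  replace (p * (a1 * cos x - a2 * sin x) - q * (a1 * cos y - a2 * sin y))
    with (p * (a1 * cos x + a2 * - sin x) - q * (a1 * cos y + a2 * - sin y)) by ring.
  pose proof (Rabs_pos (p - q)). pose proof (Rabs_pos q). pose proof (Rabs_pos (x - y)).
  nra.
Qed.

Lemma cv_scale u l A : 0 <= A -> Un_cv u l -> Un_cv (fun n => A * Rabs (u n - l)) 0.
Proof.
  intros HA Hu eps He. destruct (Hu (eps / (A + 1))) as [N HN].
  apply Rdiv_lt_0_compat; lra.
  exists N. intros n Hn. specialize (HN n Hn). unfold R_dist in *.
  rewrite Rminus_0_r, Rabs_right.
  2: { pose proof (Rabs_pos (u n - l)). apply Rle_ge, Rmult_le_pos; auto. }
  apply Rle_lt_trans with ((A + 1) * Rabs (u n - l)).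
  pose proof (Rabs_pos (u n - l)). nra.
  replace eps with ((A + 1) * (eps / (A + 1))) by (field; lra).
  apply Rmult_lt_compat_l; lra.
Qed.

Lemma Cexpi_as c x : Cscal c (Cexpi x) = Cscal c (Cmul (1, 0) (Cexpi x)).
Proof. unfold Cscal, Cmul, Cexpi; simpl. f_equal; ring. Qed.

Lemma sqrt_cv u l : 0 <= l -> Un_cv u l -> Un_cv (fun n => sqrt (u n)) (sqrt l).
Proof. intros Hl Hu. apply (continuity_seq sqrt); auto. apply continuity_pt_sqrt; auto. Qed.

Lemma h_bound c a0 (hlim : Un_cv c 1) (hc0 : 0 <= c O) :
  exists K e, 0 <= K /\ Un_cv e 0 /\
    forall n x y, Cnorm (Csub (hN c a0 n x) (hL c a0 y)) <= e n + K * Rabs (x - y).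
Proof.
  unfold hN, hL. destruct (Req_EM_T (c O) 0) as [E|E].
  - exists (2 * (Rabs 1 + Rabs 0) * Rabs 1), (fun n => 2 * (Rabs 1 + Rabs 0) * Rabs (sqrt (c n) - 1)).
    split; [|split].
    + rewrite Rabs_R1, Rabs_R0; lra.
    + apply cv_scale. rewrite Rabs_R1, Rabs_R0; lra. rewrite <- sqrt_1. apply sqrt_cv; auto; lra.
    + intros n x y. rewrite Cexpi_as. replace (Cexpi y) with (Cscal 1 (Cmul (1, 0) (Cexpi y)))
        by (unfold Cscal, Cmul, Cexpi; simpl; f_equal; ring).
      eapply Rle_trans. apply Cnorm_diff_bound. right; ring.
  - destruct a0 as [a1 a2].
    exists (2 * (Rabs a1 + Rabs a2) * Rabs (sqrt (1 / c O))),
           (fun n => 2 * (Rabs a1 + Rabs a2) * Rabs (sqrt (c n / c O) - sqrt (1 / c O))).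
    assert (0 <= Rabs a1 + Rabs a2) by (pose proof (Rabs_pos a1); pose proof (Rabs_pos a2); lra).
    split; [|split].
    + pose proof (Rabs_pos (sqrt (1 / c O))). nra.
    + apply cv_scale. lra. apply sqrt_cv.
      unfold Rdiv; apply Rmult_le_pos; [lra|left; apply Rinv_0_lt_compat; lra].
      unfold Rdiv. apply (CV_mult c (fun _ => / c O)); auto.
      intros eps He; exists O; intros; unfold R_dist; rewrite Rminus_diag, Rabs_R0; auto.
    + intros n x y. eapply Rle_trans. apply Cnorm_diff_bound. right; ring.
Qed.

Lemma hL_lip c a0 : exists K, 0 <= K /\ forall x y, Cnorm (Csub (hL c a0 x) (hL c a0 y)) <= K * Rabs (x - y).
Proof.
  unfold hL. destruct (Req_EM_T (c O) 0) as [E|E].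
  - exists (2 * (Rabs 1 + Rabs 0) * Rabs 1). split. rewrite Rabs_R1, Rabs_R0; lra.
    intros x y.
    replace (Cexpi x) with (Cscal 1 (Cmul (1, 0) (Cexpi x))) by (unfold Cscal, Cmul, Cexpi; simpl; f_equal; ring).
    replace (Cexpi y) with (Cscal 1 (Cmul (1, 0) (Cexpi y))) by (unfold Cscal, Cmul, Cexpi; simpl; f_equal; ring).
    eapply Rle_trans. apply Cnorm_diff_bound. rewrite Rminus_diag, Rabs_R0. right; ring.
  - destruct a0 as [a1 a2].
    exists (2 * (Rabs a1 + Rabs a2) * Rabs (sqrt (1 / c O))).
    assert (0 <= Rabs a1 + Rabs a2) by (pose proof (Rabs_pos a1); pose proof (Rabs_pos a2); lra).
    split. pose proof (Rabs_pos (sqrt (1 / c O))). nra.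
    intros x y. eapply Rle_trans. apply Cnorm_diff_bound. rewrite Rminus_diag, Rabs_R0. right; ring.
Qed.

Lemma fl_right n t : 0 <= t < 1 -> exists delta, 0 < delta /\
  forall s, t <= s < t + delta -> fl n s = fl n t.
Proof.
  intros Ht. destruct (fl_spec n t Ht) as [[F1 F2] F3]. pose proof (pow2_gt0 n).
  set (M := fl n t) in *.
  exists ((INR M + 1) / 2 ^ n - t). split.
  - apply Rlt_Rminus. apply div_lt_iff; auto.
  - intros s Hs. apply fl_eq_of.
    + assert (INR M + 1 <= 2 ^ n) by (rewrite <- INR_pow2, <- S_INR; apply le_INR; lia).
      assert (s < (INR M + 1) / 2 ^ n) by lra. apply div_lt_iff in H1; auto. nra.
    + assert (s < (INR M + 1) / 2 ^ n) by lra. apply div_lt_iff in H0; auto. nra.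
Qed.

Lemma dyadic_1 : dyadic 1.
Proof. split. lra. exists 1%nat, O. simpl. field. Qed.

Lemma fl_nondyadic n t : 0 <= t <= 1 -> ~ dyadic t -> exists delta, 0 < delta /\
  forall s, Rabs (s - t) < delta -> fl n s = fl n t.
Proof.
  intros Ht Hd. assert (Ht1 : t < 1).
  { destruct (Rle_lt_or_eq_dec t 1); auto; lra || (subst; exfalso; apply Hd, dyadic_1). }
  destruct (fl_spec n t ltac:(lra)) as [[F1 F2] F3]. pose proof (pow2_gt0 n).
  set (M := fl n t) in *.
  assert (F1' : INR M < 2 ^ n * t).
  { destruct F1 as [|E]; auto. exfalso. apply Hd. split; auto. exists M, n.
    rewrite E. field. lra. }
  exists (Rmin (2 ^ n * t - INR M) (INR M + 1 - 2 ^ n * t) / 2 ^ n). split.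
  - apply Rdiv_lt_0_compat; auto. apply Rmin_glb_lt; lra.
  - intros s Hs.
    assert (Hm1 : Rabs (s - t) * 2 ^ n < Rmin (2 ^ n * t - INR M) (INR M + 1 - 2 ^ n * t)).
    { apply (Rmult_lt_compat_r (2 ^ n)) in Hs; auto. unfold Rdiv in Hs.
      rewrite Rmult_assoc, Rinv_l, Rmult_1_r in Hs; lra. }
    pose proof (Rmin_l (2 ^ n * t - INR M) (INR M + 1 - 2 ^ n * t)).
    pose proof (Rmin_r (2 ^ n * t - INR M) (INR M + 1 - 2 ^ n * t)).
    assert (Hb : Rabs (2 ^ n * s - 2 ^ n * t) < Rmin (2 ^ n * t - INR M) (INR M + 1 - 2 ^ n * t)).
    { replace (2 ^ n * s - 2 ^ n * t) with ((s - t) * 2 ^ n) by ring.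
      rewrite Rabs_mult, (Rabs_right (2 ^ n)); lra. }
    apply Rabs_def2 in Hb. pose proof (pos_INR M).
    assert (INR M + 1 <= 2 ^ n) by (rewrite <- INR_pow2, <- S_INR; apply le_INR; lia).
    apply fl_eq_of; [|lra]. split; nra.
Qed.

Definition ML (n : nat) (t : R) : nat := Z.to_nat (- up (- (2 ^ n * t))).

Lemma fl_left n t : 0 < t <= 1 -> exists delta, 0 < delta /\
  forall s, t - delta < s < t -> fl n s = ML n t.
Proof.
  intros Ht. pose proof (pow2_gt0 n).
  destruct (archimed (- (2 ^ n * t))) as [A1 A2].
  unfold ML. set (z := up (- (2 ^ n * t))) in *.
  assert (Hz : (0 <= - z)%Z). { assert (-1 < - z)%Z by (apply lt_IZR; rewrite opp_IZR; simpl; nra). lia. }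
  assert (HM : INR (Z.to_nat (- z)) = - IZR z) by (rewrite INR_IZR_INZ, Z2Nat.id, opp_IZR; auto).
  set (M := Z.to_nat (- z)) in *.
  exists (t - INR M / 2 ^ n). split.
  - apply Rlt_Rminus. unfold Rdiv. apply (Rmult_lt_reg_l (2 ^ n)); auto.
    rewrite <- Rmult_assoc, Rmult_inv_r_id_m by lra. lra.
  - intros s Hs. assert (Hs1 : INR M / 2 ^ n < s) by lra.
    apply (Rmult_lt_compat_l (2 ^ n)) in Hs1; auto.
    unfold Rdiv in Hs1. rewrite <- Rmult_assoc, Rmult_inv_r_id_m in Hs1 by lra.
    assert (0 < s). { pose proof (pos_INR M). nra. }
    apply fl_eq_of. lra. split. lra. nra.
Qed.

Lemma is_RInt_eq (f : R -> R) a b (l l' : R) : is_RInt f a b l -> l = l' -> is_RInt f a b l'.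
Proof. intros; subst; auto. Qed.

Lemma RInt_step (Phi : nat -> R) n :
  is_RInt (fun t => Phi (fl n t)) 0 1 (sumR Phi (Nat.pow 2 n) / 2 ^ n).
Proof.
  pose proof (pow2_gt0 n) as Hp.
  assert (Hgen : forall M, (M <= Nat.pow 2 n)%nat ->
     is_RInt (fun t => Phi (fl n t)) 0 (INR M / 2 ^ n) (sumR Phi M / 2 ^ n)).
  { induction M; intros HM.
    - simpl. replace (0 / 2 ^ n) with 0 by (field; lra).
      apply (is_RInt_eq _ _ _ zero). apply (@is_RInt_point R_NormedModule). reflexivity.
    - apply (is_RInt_eq _ _ _ (plus (sumR Phi M / 2 ^ n) (scal (INR (S M) / 2 ^ n - INR M / 2 ^ n) (Phi M)))).
      + apply (@is_RInt_Chasles R_NormedModule) with (INR M / 2 ^ n). apply IHM; lia.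
        apply (@is_RInt_ext R_NormedModule) with (fun _ => Phi M).
        * intros x Hx. rewrite Rmin_left, Rmax_right in Hx.
          2,3: rewrite S_INR; apply Rmult_le_compat_r; [left; apply Rinv_0_lt_compat; auto|lra].
          f_equal. symmetry. destruct Hx as [Hx1 Hx2].
          apply (Rmult_lt_compat_l (2 ^ n)) in Hx1; auto.
          apply (Rmult_lt_compat_l (2 ^ n)) in Hx2; auto.
          unfold Rdiv in Hx1, Hx2. rewrite <- Rmult_assoc, Rmult_inv_r_id_m in Hx1, Hx2 by lra.
          rewrite S_INR in Hx2.
          assert (INR (S M) <= 2 ^ n) by (rewrite <- INR_pow2; apply le_INR; auto). rewrite S_INR in H.
          pose proof (pos_INR M).
          apply fl_eq_of; [split; nra|lra].
        * apply (@is_RInt_const R_NormedModule).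
      + change (sumR Phi M / 2 ^ n + (INR (S M) / 2 ^ n - INR M / 2 ^ n) * Phi M = sumR Phi (S M) / 2 ^ n).
        simpl sumR. rewrite S_INR. field. lra. }
  assert (E: INR (Nat.pow 2 n) / 2 ^ n = 1) by (rewrite INR_pow2; field; lra).
  specialize (Hgen _ (le_n _)). rewrite E in Hgen. exact Hgen.
Qed.

Lemma sumR_lin a b f g N : sumR (fun m => a * f m + b * g m) N = a * sumR f N + b * sumR g N.
Proof. induction N; simpl. ring. rewrite IHN. ring. Qed.

Lemma sumR_pairs f M : sumR f (2 * M) = sumR (fun m => f (2 * m)%nat + f (2 * m + 1)%nat) M.
Proof.
  induction M. reflexivity.
  replace (2 * S M)%nat with (S (S (2 * M))) by lia. cbn [sumR]. rewrite IHM.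
  replace (S (2 * M)) with (2 * M + 1)%nat by lia. ring.
Qed.

Lemma Gd_even c n m w : Gd c (S n) (2 * m) w = Gd c n m w + d (S n) (S m) w * theta c (S n).
Proof.
  cbn [Gd]. replace ((2 * m) / 2)%nat with m by (apply Nat.div_unique with 0%nat; lia).
  unfold sgn. rewrite Nat.even_even. ring.
Qed.

Lemma Gd_odd c n m w : Gd c (S n) (2 * m + 1) w = Gd c n m w - d (S n) (S m) w * theta c (S n).
Proof.
  cbn [Gd]. replace ((2 * m + 1) / 2)%nat with m by (apply Nat.div_unique with 1%nat; lia).
  unfold sgn. rewrite Nat.even_odd. ring.
Qed.

Fixpoint Pc (c : nat -> R) (n : nat) : R :=
  match n with O => 1 | S n' => Pc c n' * cos (theta c (S n')) end.

Lemma cos_pm g x e : (e = 1 \/ e = -1) -> cos (g + e * x) + cos (g - e * x) = 2 * cos g * cos x.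
Proof. intros [->| ->]; [replace (1 * x) with x by ring | replace (-1 * x) with (- x) by ring]; rewrite cos_plus, cos_minus, ?cos_neg, ?sin_neg; ring. Qed.

Lemma sin_pm g x e : (e = 1 \/ e = -1) -> sin (g + e * x) + sin (g - e * x) = 2 * sin g * cos x.
Proof. intros [->| ->]; [replace (1 * x) with x by ring | replace (-1 * x) with (- x) by ring]; rewrite sin_plus, sin_minus, ?cos_neg, ?sin_neg; ring. Qed.

Lemma d_pm k j w : d k j w = 1 \/ d k j w = -1.
Proof. unfold d; destruct (w k j); auto. Qed.

Lemma disc_sums c w n :
  sumR (fun m => cos (Gd c n m w)) (Nat.pow 2 n) = 2 ^ n * Pc c n /\
  sumR (fun m => sin (Gd c n m w)) (Nat.pow 2 n) = 0.
Proof.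
  induction n as [|n [IH1 IH2]].
  - simpl. rewrite cos_0, sin_0. split; ring.
  - rewrite pow2_S, !sumR_pairs.
    rewrite (sumR_ext _ (fun m => 2 * cos (theta c (S n)) * cos (Gd c n m w) + 0 * 0)).
    rewrite (sumR_ext (fun m => sin _ + sin _) (fun m => 2 * cos (theta c (S n)) * sin (Gd c n m w) + 0 * 0)).
    + rewrite !(sumR_lin _ 0 _ (fun _ => 0)), IH1, IH2. simpl. split; ring.
    + intros m _. rewrite Gd_even, Gd_odd. rewrite sin_pm by apply d_pm. ring.
    + intros m _. rewrite Gd_even, Gd_odd. rewrite cos_pm by apply d_pm. ring.
Qed.

Lemma Pc_val c (hmono : forall n, c n <= c (S n)) (hc0 : 0 <= c O) (hc1 : 0 < c 1%nat) n :
  (1 <= n)%nat -> Pc c n = sqrt (c O / c n).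
Proof.
  assert (Hpos : forall k, (1 <= k)%nat -> 0 < c k).
  { intros k Hk. apply Rlt_le_trans with (c 1%nat); auto. apply c_mono_le; auto. }
  assert (Hcos : forall k, cos (theta c (S k)) = sqrt (c k / c (S k))).
  { intro k. unfold theta. replace (S k - 1)%nat with k by lia.
    assert (H0 : 0 <= c k) by (apply (Rle_trans _ (c O)); auto; apply c_mono_le; auto; lia).
    pose proof (Hpos (S k) ltac:(lia)). pose proof (hmono k).
    assert (Hr : 0 <= (c (S k) - c k) / c (S k) <= 1).
    { split. unfold Rdiv; apply Rmult_le_pos; [lra|left; apply Rinv_0_lt_compat; lra]. apply div_le_iff; lra. }
    rewrite cos_asin. f_equal. unfold Rsqr. rewrite sqrt_sqrt by lra. field. lra.
    split. pose proof (sqrt_pos ((c (S k) - c k) / c (S k))). lra.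
    rewrite <- sqrt_1. apply sqrt_le_1_alt; lra. }
  induction 1.
  - simpl. rewrite Hcos. f_equal; ring.
  - simpl. rewrite IHle, Hcos. rewrite <- sqrt_mult_alt.
    f_equal. pose proof (Hpos m H). pose proof (Hpos (S m) ltac:(lia)). field. lra.
    unfold Rdiv; apply Rmult_le_pos; auto. left; apply Rinv_0_lt_compat; apply Hpos; auto.
Qed.

Lemma int_hN c a0 (hmono : forall n, c n <= c (S n)) (hc0 : 0 <= c O) (hc1 : 0 < c 1%nat)
  (ha : Cnorm a0 = sqrt (c O)) w n : (1 <= n)%nat ->
  is_RInt (fun t => fst (hN c a0 n (HH c n t w))) 0 1 (fst a0) /\
  is_RInt (fun t => snd (hN c a0 n (HH c n t w))) 0 1 (snd a0).
Proof.
  intros Hn. pose proof (pow2_gt0 n) as Hp.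
  pose proof (a0_norm a0 (c O) ha hc0) as Hn0.
  destruct (disc_sums c w n) as [D1 D2].
  pose proof (Pc_val c hmono hc0 hc1 n Hn) as HP.
  assert (Hcn : 0 < c n) by (apply Rlt_le_trans with (c 1%nat); auto; apply c_mono_le; auto).
  split.
  - eapply is_RInt_eq. apply (RInt_step (fun m => fst (hN c a0 n (Gd c n m w))) n).
    unfold hN. destruct (Req_EM_T (c O) 0) as [E|E]; unfold Cscal, Cmul, Cexpi; simpl.
    + rewrite (sumR_ext _ (fun m => sqrt (c n) * cos (Gd c n m w) + 0 * 0)) by (intros; ring).
      rewrite (sumR_lin _ 0 _ (fun _ => 0)), D1, HP, E.
      assert (Ha1 : fst a0 = 0) by nra. rewrite Ha1. unfold Rdiv. rewrite Rmult_0_l, sqrt_0. field. lra.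
    + rewrite (sumR_ext _ (fun m => (sqrt (c n / c O) * fst a0) * cos (Gd c n m w)
               + (- (sqrt (c n / c O) * snd a0)) * sin (Gd c n m w))) by (intros; ring).
      rewrite sumR_lin, D1, D2, HP.
      transitivity (fst a0 * (sqrt (c n / c O) * sqrt (c O / c n))). field. lra.
      rewrite <- sqrt_mult_alt. replace (c n / c O * (c O / c n)) with 1 by (field; lra).
      rewrite sqrt_1; ring.
      unfold Rdiv; apply Rmult_le_pos; [lra|left; apply Rinv_0_lt_compat; lra].
  - eapply is_RInt_eq. apply (RInt_step (fun m => snd (hN c a0 n (Gd c n m w))) n).
    unfold hN. destruct (Req_EM_T (c O) 0) as [E|E]; unfold Cscal, Cmul, Cexpi; simpl.
    + rewrite (sumR_ext _ (fun m => sqrt (c n) * sin (Gd c n m w) + 0 * 0)) by (intros; ring).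
      rewrite (sumR_lin _ 0 _ (fun _ => 0)), D2.
      assert (Ha1 : snd a0 = 0) by nra. rewrite Ha1. simpl. field. lra.
    + rewrite (sumR_ext _ (fun m => (sqrt (c n / c O) * snd a0) * cos (Gd c n m w)
               + (sqrt (c n / c O) * fst a0) * sin (Gd c n m w))) by (intros; ring).
      rewrite sumR_lin, D1, D2, HP.
      transitivity (snd a0 * (sqrt (c n / c O) * sqrt (c O / c n))). field. lra.
      rewrite <- sqrt_mult_alt. replace (c n / c O * (c O / c n)) with 1 by (field; lra).
      rewrite sqrt_1; ring.
      unfold Rdiv; apply Rmult_le_pos; [lra|left; apply Rinv_0_lt_compat; lra].
Qed.

Lemma open_lt k a : 0 < k -> R_open (fun t => k * t < a).
Proof.
  intros Hk x Hx. exists ((a - k * x) / k). split. apply Rdiv_lt_0_compat; lra.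
  intros y Hy. apply Rabs_def2 in Hy. destruct Hy as [Hy1 Hy2].
  apply (Rmult_lt_compat_l k) in Hy1; auto. unfold Rdiv in Hy1.
  replace (k * ((a - k * x) * / k)) with (a - k * x) in Hy1 by (field; lra). nra.
Qed.

Lemma open_gt k a : 0 < k -> R_open (fun t => a < k * t).
Proof.
  intros Hk x Hx. exists ((k * x - a) / k). split. apply Rdiv_lt_0_compat; lra.
  intros y Hy. apply Rabs_def2 in Hy. destruct Hy as [Hy1 Hy2].
  apply (Rmult_lt_compat_l k) in Hy2; auto. unfold Rdiv in Hy2.
  replace (k * (- ((k * x - a) * / k))) with (a - k * x) in Hy2 by (field; lra). nra.
Qed.

Lemma borel_le k a : 0 < k -> borel_R (fun t => a <= k * t).
Proof.
  intros Hk. eapply sg_ext. apply sg_compl, sg_base, (open_lt k a Hk).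
  intro x; simpl; split; intro H; lra.
Qed.

Lemma borel_lt k a : 0 < k -> borel_R (fun t => k * t < a).
Proof. intros; apply sg_base, open_lt; auto. Qed.

Lemma borel_unit : borel_R (fun t => 0 <= t <= 1).
Proof.
  eapply sg_ext. apply sg_inter2; [apply (borel_le 1 0)|apply (sg_compl _ _ (sg_base _ _ (open_gt 1 1 ltac:(lra))))]; lra.
  intro x; simpl; split; intros; lra.
Qed.

Lemma fl_char n t m : fl n t = m <->
  ((m < Nat.pow 2 n)%nat /\ (m = 0%nat \/ INR m <= 2 ^ n * t) /\
   (S m = Nat.pow 2 n \/ 2 ^ n * t < INR m + 1)).
Proof.
  pose proof (pow2_gt0 n) as Hp. pose proof (pow2_pos n) as Hpn.
  destruct (Rlt_dec t 0) as [Hneg|Hneg].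
  - rewrite fl_neg by auto. split.
    + intros <-. split; auto. split; auto. right. simpl; nra.
    + intros [H1 [[H2|H2] H3]]; auto. pose proof (pos_INR m). destruct m; auto.
      rewrite S_INR in H2. pose proof (pos_INR m). nra.
  - destruct (Rlt_dec t 1) as [Hlt|Hlt].
    + destruct (fl_spec n t ltac:(lra)) as [[F1 F2] F3]. split.
      * intros <-. auto.
      * intros [H1 [H2 H3]]. apply fl_eq_of. lra. split.
        destruct H2 as [->|]; auto. simpl; nra.
        destruct H3 as [E|]; auto. rewrite <- S_INR, E, INR_pow2. nra.
    + rewrite fl_ge1 by lra. split.
      * intros <-. split. lia. split. right.
        replace (Nat.pred (Nat.pow 2 n)) with (Nat.pow 2 n - 1)%nat by lia.
        rewrite minus_INR by lia. rewrite INR_pow2. simpl. nra. left; lia.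
      * intros [H1 [H2 [H3|H3]]]. lia. exfalso.
        assert (S m <= Nat.pow 2 n)%nat by lia. apply le_INR in H. rewrite S_INR, INR_pow2 in H. nra.
Qed.

Lemma borel_fl n m : borel_R (fun t => fl n t = m).
Proof.
  pose proof (pow2_gt0 n) as Hp.
  apply sg_ext with (A := fun t => (m < Nat.pow 2 n)%nat /\ ((m = 0%nat \/ INR m <= 2 ^ n * t) /\
   (S m = Nat.pow 2 n \/ 2 ^ n * t < INR m + 1))).
  - apply sg_inter2. apply sg_const. apply sg_inter2.
    apply sg_or_const, borel_le; auto. apply sg_or_const, borel_lt; auto.
  - intro t. rewrite fl_char. simpl. apply iff_refl.
Qed.

Lemma Gd_dep c n : forall m w w', (forall k j, (k <= n)%nat -> (j <= S m)%nat -> w k j = w' k j) ->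
  Gd c n m w = Gd c n m w'.
Proof.
  induction n; intros m w w' Hw. reflexivity.
  cbn [Gd]. rewrite (IHn (m / 2)%nat w w').
  - unfold d. rewrite Hw; auto. apply le_n_S, Nat.div_le_upper_bound; lia.
  - intros k j Hk Hj. apply Hw. lia. assert (m / 2 <= m)%nat by (apply Nat.div_le_upper_bound; lia). lia.
Qed.

Lemma cyl_Gd c n m (P : R -> Prop) : cyl_sigma (fun w => P (Gd c n m w)).
Proof.
  apply (cyl_fin (list_prod (seq 0 (S n)) (seq 0 (S (S m))))).
  intros w w' Hw. rewrite (Gd_dep c n m w w'). tauto.
  intros k j Hk Hj. apply Hw. apply in_prod; apply in_seq; lia.
Qed.

Lemma prod_H c n (P : R -> Prop) : prod_sigma (fun p => P (HH c n (fst p) (snd p))).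
Proof.
  eapply sg_ext.
  - apply (sg_union _ (fun m p => fl n (fst p) = m /\ P (Gd c n m (snd p)))).
    intro m. apply sg_base. exists (fun t => fl n t = m), (fun w => P (Gd c n m w)).
    split. apply borel_fl. split. apply cyl_Gd. intro; apply iff_refl.
  - intros [t w]. unfold HH. simpl. split.
    + intros [m [<- Hm]]; auto.
    + intros Hp; exists (fl n t); auto.
Qed.

Lemma cyl_H c n t (P : R -> Prop) : cyl_sigma (fun w => P (HH c n t w)).
Proof. apply cyl_Gd. Qed.

Lemma Rabs_fst_le z : Rabs (fst z) <= Cnorm z.
Proof.
  unfold Cnorm. rewrite <- sqrt_Rsqr_abs. apply sqrt_le_1_alt. unfold Rsqr.
  pose proof (Rle_0_sqr (snd z)). unfold Rsqr in *. lra.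
Qed.

Lemma Rabs_snd_le z : Rabs (snd z) <= Cnorm z.
Proof.
  unfold Cnorm. rewrite <- sqrt_Rsqr_abs. apply sqrt_le_1_alt. unfold Rsqr.
  pose proof (Rle_0_sqr (fst z)). unfold Rsqr in *. lra.
Qed.

Theorem mainTheorem5 (c : nat -> R) (alpha0 : Cpx)
  (hmono : forall n, c n <= c (S n))
  (hc0 : 0 <= c O) (hc1 : 0 < c 1%nat)
  (halpha0 : Cnorm alpha0 = sqrt (c O))
  (hlim : Un_cv c 1)
  (hsum : exists l, Un_cv (fun N => sum_f_R0 (fun n => sqrt (c (S n) - c n)) N) l) :
  exists alpha : R -> Omega -> Cpx,
    (* uniform convergence on [0,1], for every omega *)
    (forall w eps, 0 < eps -> exists N, forall n t, (N <= n)%nat -> 0 <= t <= 1 ->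
        Cnorm (Csub (alpha_n c alpha0 n t w) (alpha t w)) < eps) /\
    (* joint measurability on [0,1] x Omega *)
    (forall E, borel_C E ->
        prod_sigma (fun p => 0 <= fst p <= 1 /\ E (alpha (fst p) (snd p)))) /\
    (* measurability in omega for each t *)
    (forall t, 0 <= t <= 1 -> forall E, borel_C E ->
        cyl_sigma (fun w => E (alpha t w))) /\
    (forall w,
      (* (i) continuity off the dyadics, Riemann integrability *)
      (forall t, 0 <= t <= 1 -> ~ dyadic t ->
         forall eps, 0 < eps -> exists delta, 0 < delta /\
           forall s, 0 <= s <= 1 -> Rabs (s - t) < delta ->
             Cnorm (Csub (alpha s w) (alpha t w)) < eps) /\
      inhabited (Riemann_integrable (fun t => fst (alpha t w)) 0 1) /\
      inhabited (Riemann_integrable (fun t => snd (alpha t w)) 0 1) /\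
      (* (ii) right-continuity and left limits at dyadics *)
      (forall t, dyadic t ->
         (forall eps, 0 < eps -> exists delta, 0 < delta /\
            forall s, t <= s <= 1 -> s - t < delta ->
              Cnorm (Csub (alpha s w) (alpha t w)) < eps) /\
         (0 < t -> exists L : Cpx, forall eps, 0 < eps -> exists delta, 0 < delta /\
            forall s, 0 <= s < t -> t - s < delta ->
              Cnorm (Csub (alpha s w) L) < eps)) /\
      (* (iii) unimodularity and the integral *)
      (forall t, 0 <= t <= 1 -> Cnorm (alpha t w) = 1) /\
      (exists (pr1 : Riemann_integrable (fun t => fst (alpha t w)) 0 1)
              (pr2 : Riemann_integrable (fun t => snd (alpha t w)) 0 1),
          RiemannInt pr1 = fst alpha0 /\ RiemannInt pr2 = snd alpha0)).

Proof.
  destruct (Th_ex c hmono hc0 hc1 hsum) as [Th [tl [HTh [Htl Htl0]]]].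
  destruct (h_bound c alpha0 hlim hc0) as [K [e [HK [He Hbound]]]].
  destruct (hL_lip c alpha0) as [KL [HKL Hlip]].
  assert (Htlpos : forall N, 0 <= tl N).
  { intro N. eapply Rle_trans; [apply Rabs_pos| apply (Htl N 0 (fun _ _ => true))]. }
  assert (Htlsmall : forall eps, 0 < eps -> exists N, forall n, (N <= n)%nat -> tl n < eps).
  { intros eps Heps. destruct (Htl0 eps Heps) as [N HN]. exists N. intros n Hn.
    specialize (HN n Hn). unfold R_dist in HN. rewrite Rminus_0_r in HN.
    apply Rabs_def2 in HN; lra. }
  assert (Hunif_all : forall w eps, 0 < eps -> exists N, forall n t, (N <= n)%nat ->
     Cnorm (Csub (hN c alpha0 n (HH c n t w)) (hL c alpha0 (Th t w))) < eps).
  { intros w eps Heps.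
    destruct (He (eps / 2)) as [N1 HN1]. lra.
    destruct (Htlsmall (eps / (2 * (K + 1)))) as [N2 HN2]. apply Rdiv_lt_0_compat; lra.
    exists (max N1 N2). intros n t Hn.
    specialize (HN1 n ltac:(lia)). specialize (HN2 n ltac:(lia)).
    unfold R_dist in HN1. rewrite Rminus_0_r in HN1. apply Rabs_def2 in HN1.
    eapply Rle_lt_trans. apply Hbound.
    pose proof (Htl n t w) as Hq. rewrite Rabs_minus_sym in Hq.
    assert (K * Rabs (HH c n t w - Th t w) <= (K + 1) * tl n).
    { pose proof (Rabs_pos (HH c n t w - Th t w)). pose proof (Htlpos n). nra. }
    assert ((K + 1) * tl n < eps / 2).
    { replace (eps / 2) with ((K + 1) * (eps / (2 * (K + 1)))) by (field; lra).
      apply Rmult_lt_compat_l; lra. }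
    lra. }
  assert (Hopen : forall U, C_open U -> R_open (fun y => U (hL c alpha0 y))).
  { intros U HU y Hy. destruct (HU _ Hy) as [eps [Heps HU']].
    exists (eps / (KL + 1)). split. apply Rdiv_lt_0_compat; lra.
    intros y' Hy'. apply HU'. eapply Rle_lt_trans. apply Hlip.
    pose proof (Rabs_pos (y' - y)).
    apply Rle_lt_trans with ((KL + 1) * Rabs (y' - y)). nra.
    replace eps with ((KL + 1) * (eps / (KL + 1))) by (field; lra).
    apply Rmult_lt_compat_l; lra. }
  exists (fun t w => hL c alpha0 (Th t w)).
  split; [|split; [|split]].
  - intros w eps Heps. destruct (Hunif_all w eps Heps) as [N HN]. exists N.
    intros n t Hn Ht. rewrite alpha_n_hN, Theta_H by auto. apply HN; auto.
  - intros E HE.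
    assert (Hm : prod_sigma (fun p => E (hL c alpha0 (Th (fst p) (snd p))))).
    { apply (borel_pre _ (fun p => hL c alpha0 (Th (fst p) (snd p)))); auto.
      intros U HU.
      apply (lim_meas _ (fun n p => HH c n (fst p) (snd p)) (fun p => Th (fst p) (snd p))
               (fun p => HTh (fst p) (snd p)) (fun n P => prod_H c n P) _ (Hopen U HU)). }
    apply (sg_inter2 _ (fun p => 0 <= fst p <= 1) (fun p => E (hL c alpha0 (Th (fst p) (snd p))))); auto.
    apply sg_base. exists (fun t => 0 <= t <= 1), (fun _ => True).
    split. apply borel_unit. split. apply sg_full. intro; tauto.
  - intros t _ E HE.
    apply (borel_pre _ (fun w => hL c alpha0 (Th t w))); auto.
    intros U HU.
    apply (lim_meas _ (fun n w => HH c n t w) (fun w => Th t w)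
             (fun w => HTh t w) (fun n P => cyl_H c n t P) _ (Hopen U HU)).
  - intro w.
    assert (Hclose : forall N s t, HH c N s w = HH c N t w ->
       Cnorm (Csub (hL c alpha0 (Th s w)) (hL c alpha0 (Th t w))) <= KL * (2 * tl N)).
    { intros N s t HE. eapply Rle_trans. apply Hlip. apply Rmult_le_compat_l; auto.
      replace (Th s w - Th t w) with ((Th s w - HH c N s w) + (HH c N t w - Th t w)) by (rewrite HE; ring).
      eapply Rle_trans. apply Rabs_triang. pose proof (Htl N s w) as Hq1. pose proof (Htl N t w) as Hq2.
      rewrite (Rabs_minus_sym (HH c N t w)). lra. }
    assert (Hsmall : forall eps, 0 < eps -> exists N, KL * (2 * tl N) < eps).
    { intros eps Heps. destruct (Htlsmall (eps / (2 * (KL + 1)))) as [N HN].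
      apply Rdiv_lt_0_compat; lra. exists N. specialize (HN N (le_n _)).
      pose proof (Htlpos N).
      apply Rle_lt_trans with ((KL + 1) * (2 * tl N)). nra.
      replace eps with ((KL + 1) * (2 * (eps / (2 * (KL + 1))))) by (field; lra).
      apply Rmult_lt_compat_l; lra. }
    assert (Hint : forall (proj : Cpx -> R) (v : R),
       (forall z, Rabs (proj z) <= Cnorm z) ->
       (forall z1 z2, proj (Csub z1 z2) = proj z1 - proj z2) ->
       (forall n, (1 <= n)%nat -> is_RInt (fun t => proj (hN c alpha0 n (HH c n t w))) 0 1 v) ->
       is_RInt (fun t => proj (hL c alpha0 (Th t w))) 0 1 v).
    { intros proj v Hproj Hsub Hi.
      destruct (filterlim_RInt (fun n t => proj (hN c alpha0 (S n) (HH c (S n) t w))) 0 1 eventually eventually_filter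
                 (fun t => proj (hL c alpha0 (Th t w))) (fun _ => v)) as [If [HIf1 HIf2]].
      - intro n. apply Hi. lia.
      - apply filterlim_locally. intros eps.
        destruct (Hunif_all w eps (cond_pos eps)) as [N HN]. exists N. intros n Hn t.
        specialize (HN (S n) t ltac:(lia)).
        change (Rabs (proj (hN c alpha0 (S n) (HH c (S n) t w)) - proj (hL c alpha0 (Th t w))) < eps).
        rewrite <- Hsub. eapply Rle_lt_trans. apply Hproj. auto.
      - replace v with If; auto. symmetry.
        apply (@filterlim_locally_unique nat R_AbsRing R_NormedModule eventually (Proper_StrongProper _ eventually_filter) (fun _ : nat => v)). apply filterlim_const. auto. }
    assert (Hi1 : is_RInt (fun t => fst (hL c alpha0 (Th t w))) 0 1 (fst alpha0)).
    { apply (Hint fst). apply Rabs_fst_le. reflexivity.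
      intros n Hn. apply (int_hN c alpha0 hmono hc0 hc1 halpha0 w n Hn). }
    assert (Hi2 : is_RInt (fun t => snd (hL c alpha0 (Th t w))) 0 1 (snd alpha0)).
    { apply (Hint snd). apply Rabs_snd_le. reflexivity.
      intros n Hn. apply (int_hN c alpha0 hmono hc0 hc1 halpha0 w n Hn). }
    split; [|split; [|split; [|split; [|split]]]].
    + intros t Ht Hnd eps Heps. destruct (Hsmall eps Heps) as [N HN].
      destruct (fl_nondyadic N t Ht Hnd) as [dl [Hdl Hfl]]. exists dl. split; auto.
      intros s Hs Hst. eapply Rle_lt_trans; [|apply HN]. apply Hclose. unfold HH. rewrite Hfl; auto.
    + constructor. apply ex_RInt_Reals_0. exists (fst alpha0); auto.
    + constructor. apply ex_RInt_Reals_0. exists (snd alpha0); auto.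
    + intros t Hd. destruct Hd as [[Ht0 Ht1] Hd']. split.
      * intros eps Heps. destruct (Hsmall eps Heps) as [N HN].
        destruct (Rlt_dec t 1) as [Hlt|Hlt].
        -- destruct (fl_right N t) as [dl [Hdl Hfl]]. lra. exists dl. split; auto.
           intros s Hs Hst. eapply Rle_lt_trans; [|apply HN]. apply Hclose. unfold HH. rewrite Hfl; auto. lra.
        -- exists 1. split. lra. intros s Hs _. replace s with t by lra. rewrite Cnorm_sub_self; auto.
      * intros Htpos.
        set (V := fun N => Gd c N (ML N t) w).
        assert (HV : forall N, exists dl, 0 < dl /\ forall s, t - dl < s < t -> HH c N s w = V N).
        { intro N. destruct (fl_left N t) as [dl [Hdl Hfl]]. lra. exists dl; split; auto.
          intros s Hs. unfold HH, V. rewrite Hfl; auto. }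
        assert (Hcau : Cauchy_crit V).
        { intros eps Heps. destruct (Htlsmall (eps / 2)) as [N HN]. lra. exists N. intros n m Hn Hm.
          destruct (HV n) as [d1 [Hd1 H1]]. destruct (HV m) as [d2 [Hd2 H2]].
          set (s := t - Rmin d1 d2 / 2).
          assert (0 < Rmin d1 d2) by (apply Rmin_glb_lt; auto).
          pose proof (Rmin_l d1 d2). pose proof (Rmin_r d1 d2).
          rewrite <- (H1 s) by (unfold s; lra). rewrite <- (H2 s) by (unfold s; lra).
          unfold Rdist. replace (HH c n s w - HH c m s w) with ((HH c n s w - Th s w) + (Th s w - HH c m s w)) by ring.
          eapply Rle_lt_trans. apply Rabs_triang. rewrite Rabs_minus_sym.
          pose proof (Htl n s w) as Hq1. pose proof (Htl m s w) as Hq2.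
          pose proof (HN n Hn). pose proof (HN m Hm). lra. }
        destruct (Rcomplete.R_complete V Hcau) as [VL HVL].
        exists (hL c alpha0 VL). intros eps Heps.
        set (eps' := eps / (2 * (KL + 1))).
        assert (He' : 0 < eps') by (unfold eps'; apply Rdiv_lt_0_compat; lra).
        destruct (Htlsmall eps' He') as [N1 HN1].
        destruct (HVL eps' He') as [N2 HN2].
        set (N := max N1 N2). destruct (HV N) as [dl [Hdl Hfl]]. exists dl. split; auto.
        intros s Hs Hts. eapply Rle_lt_trans. apply Hlip.
        specialize (HN1 N (Nat.le_max_l _ _)); specialize (HN2 N (Nat.le_max_r _ _)). unfold R_dist in HN2.
        assert (Hb : Rabs (Th s w - VL) < 2 * eps').
        { replace (Th s w - VL) with ((Th s w - HH c N s w) + (V N - VL)) by (rewrite Hfl by lra; ring).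
          eapply Rle_lt_trans. apply Rabs_triang. pose proof (Htl N s w). lra. }
        pose proof (Rabs_pos (Th s w - VL)).
        apply Rle_lt_trans with ((KL + 1) * Rabs (Th s w - VL)). nra.
        replace eps with ((KL + 1) * (2 * eps')) by (unfold eps'; field; lra).
        apply Rmult_lt_compat_l; lra.
    + intros t _. apply hL_norm; auto.
    + exists (ex_RInt_Reals_0 _ _ _ (ex_intro _ _ Hi1)), (ex_RInt_Reals_0 _ _ _ (ex_intro _ _ Hi2)).
      split; rewrite <- RInt_Reals; apply is_RInt_unique; auto.
Qed.
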